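(* Under the curve flow $\gamma_t=\gamma''-\tfrac23k_1\gamma$, one has $(k_1)_t=D(k_1'+2k_2)$, so $\int k_1\,\mathrm{d}x$ is conserved.
   Context: $\gamma(x,t)$ is a family of nondegenerate curves in centroaffine $\mathbb R^3$ parametrized by centroaffine arclength $x$ ($\det(\gamma,\gamma',\gamma'')=1$), with invariants $k_1,k_2$ defined by $\gamma'''=(k_1\gamma)'+k_2\gamma$; $D=\partial/\partial x$. *)

(* Defs.v *)
From Stdlib Require Import Reals List.
From Coquelicot Require Import Coquelicot.
Open Scope R_scope.

Definition Pdx (f : R -> R -> R) : R -> R -> R :=
  fun x t => Derive (fun y => f y t) x.
Definition Pdt (f : R -> R -> R) : R -> R -> R :=
  fun x t => Derive (fun s => f x s) t.

Fixpoint dapply (l : list bool) (f : R -> R -> R) : R -> R -> R :=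
  match l with
  | nil => f
  | b :: l' => (if b then Pdx else Pdt) (dapply l' f)
  end.

Definition smooth2 (f : R -> R -> R) : Prop :=
  forall l : list bool,
    (forall x t, ex_derive (fun y => dapply l f y t) x /\
                 ex_derive (fun s => dapply l f x s) t) /\
    (forall x t, continuous (fun p : R * R => dapply l f (fst p) (snd p)) (x, t)).

(* det(a, b, c) for column vectors a, b, c in R^3. *)
Definition det3 (a1 a2 a3 b1 b2 b3 c1 c2 c3 : R) : R :=
  a1 * (b2 * c3 - b3 * c2) - a2 * (b1 * c3 - b3 * c1) + a3 * (b1 * c2 - b2 * c1).

(* Main.v *)
Require Import Defs.
From Stdlib Require Import Reals List FunctionalExtensionality Lra.
From Coquelicot Require Import Coquelicot.
Open Scope R_scope.

Lemma dapply_app l l' f : dapply (l ++ l') f = dapply l (dapply l' f).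
Proof. induction l as [|b l IH]; simpl; [reflexivity| rewrite IH; reflexivity]. Qed.

Lemma smooth_Pdx f : smooth2 f -> smooth2 (Pdx f).
Proof. intros H l. replace (dapply l (Pdx f)) with (dapply (l ++ true :: nil) f)
  by (rewrite dapply_app; reflexivity). apply H. Qed.
Lemma smooth_Pdt f : smooth2 f -> smooth2 (Pdt f).
Proof. intros H l. replace (dapply l (Pdt f)) with (dapply (l ++ false :: nil) f)
  by (rewrite dapply_app; reflexivity). apply H. Qed.

Lemma sx f : smooth2 f -> forall x t, ex_derive (fun y => f y t) x.
Proof. intros H x t. exact (proj1 (proj1 (H nil) x t)). Qed.
Lemma st f : smooth2 f -> forall x t, ex_derive (fun s => f x s) t.
Proof. intros H x t. exact (proj2 (proj1 (H nil) x t)). Qed.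
Lemma scont f : smooth2 f -> forall x t, continuous (fun p : R * R => f (fst p) (snd p)) (x, t).
Proof. intros H x t. exact (proj2 (H nil) x t). Qed.

Lemma schwarz f : smooth2 f -> forall x t, Pdt (Pdx f) x t = Pdx (Pdt f) x t.
Proof.
  intros H x t. unfold Pdt, Pdx. symmetry. apply Schwarz.
  - exists (mkposreal 1 Rlt_0_1). intros u v _ _. repeat split.
    + apply (sx f H).
    + apply (st f H).
    + apply (sx (Pdt f) (smooth_Pdt f H)).
    + apply (st (Pdx f) (smooth_Pdx f H)).
  - apply continuity_2d_pt_filterlim. apply (scont (Pdx (Pdt f))).
    apply smooth_Pdx, smooth_Pdt, H.
  - apply continuity_2d_pt_filterlim. apply (scont (Pdt (Pdx f))).
    apply smooth_Pdt, smooth_Pdx, H.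
Qed.

Ltac sm := match goal with
  | |- smooth2 (Pdx ?f) => apply smooth_Pdx; sm
  | |- smooth2 (Pdt ?f) => apply smooth_Pdt; sm
  | |- smooth2 _ => assumption end.
Ltac exd := match goal with
  | |- _ /\ _ => split; exd
  | |- True => exact I
  | |- ex_derive (fun y => _ y ?t) _ => apply sx; sm
  | |- ex_derive (fun s => _ ?x s) _ => apply st; sm
  end.


Ltac fold_d := repeat match goal with
  | |- context [Derive (fun y => ?F y ?t) ?x] => change (Derive (fun y => F y t) x) with (Pdx F x t)
  | |- context [Derive (fun s => ?F ?x s) ?t] => change (Derive (fun s => F x s) t) with (Pdt F x t)
  end.

Ltac dcomp := apply is_derive_unique; auto_derive; [exd | fold_d].

Section Comp.
Variables g k1 k2 : R -> R -> R.
Hypotheses (Hg : smooth2 g) (Hk1 : smooth2 k1) (Hk2 : smooth2 k2).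
Hypothesis HI : forall x t, Pdx (Pdx (Pdx g)) x t = Pdx k1 x t * g x t + k1 x t * Pdx g x t + k2 x t * g x t.
Hypothesis HF : forall x t, Pdt g x t = Pdx (Pdx g) x t - 2/3 * k1 x t * g x t.

Lemma EHF : Pdt g = fun y s => Pdx (Pdx g) y s - 2/3 * k1 y s * g y s.
Proof. extensionality x; extensionality t. apply HF. Qed.
Lemma EHI : Pdx (Pdx (Pdx g)) = fun y s => Pdx k1 y s * g y s + k1 y s * Pdx g y s + k2 y s * g y s.
Proof. extensionality x; extensionality t. apply HI. Qed.

Lemma EP1 : Pdx (Pdt g) = fun y s => 1/3 * Pdx k1 y s * g y s + 1/3 * k1 y s * Pdx g y s + k2 y s * g y s.
Proof. extensionality x; extensionality t. rewrite EHF. unfold Pdx at 1. dcomp.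
  rewrite HI. field. Qed.

Lemma EP2 : Pdx (Pdx (Pdt g)) = fun y s => 1/3 * (Pdx (Pdx k1) y s * g y s + Pdx k1 y s * Pdx g y s)
   + 1/3 * (Pdx k1 y s * Pdx g y s + k1 y s * Pdx (Pdx g) y s) + Pdx k2 y s * g y s + k2 y s * Pdx g y s.
Proof. extensionality x; extensionality t. rewrite EP1. unfold Pdx at 1. dcomp. field. Qed.

Lemma comp x t :
  (Pdt k1 x t - Pdx (Pdx k1) x t - 2 * Pdx k2 x t) * Pdx g x t +
  (Pdx (Pdt k1) x t + Pdt k2 x t - 1/3 * Pdx (Pdx (Pdx k1)) x t - 2/3 * k1 x t * Pdx k1 x t
    - Pdx (Pdx k2) x t) * g x t = 0.
Proof.
  assert (E1 : Pdt (Pdx g) = Pdx (Pdt g)).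
  { extensionality y; extensionality s. apply schwarz; exact Hg. }
  assert (E2 : Pdt (Pdx (Pdx g)) = Pdx (Pdx (Pdt g))).
  { extensionality y; extensionality s. rewrite schwarz by sm. rewrite E1. reflexivity. }
  assert (A : Pdt (Pdx (Pdx (Pdx g))) x t = Pdx (Pdx (Pdx (Pdt g))) x t).
  { rewrite schwarz by sm. rewrite E2. reflexivity. }
  assert (L : Pdt (Pdx (Pdx (Pdx g))) x t =
     Pdx (Pdt k1) x t * g x t + Pdx k1 x t * (Pdx (Pdx g) x t - 2/3 * k1 x t * g x t)
     + Pdt k1 x t * Pdx g x t
     + k1 x t * (1/3 * Pdx k1 x t * g x t + 1/3 * k1 x t * Pdx g x t + k2 x t * g x t)
     + Pdt k2 x t * g x t + k2 x t * (Pdx (Pdx g) x t - 2/3 * k1 x t * g x t)).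
  { rewrite EHI. unfold Pdt at 1. dcomp.
    rewrite (schwarz k1 Hk1), (schwarz g Hg), EP1, HF. field. }
  assert (Rr : Pdx (Pdx (Pdx (Pdt g))) x t =
     1/3 * (Pdx (Pdx (Pdx k1)) x t * g x t + Pdx (Pdx k1) x t * Pdx g x t)
     + 2/3 * (Pdx (Pdx k1) x t * Pdx g x t + Pdx k1 x t * Pdx (Pdx g) x t)
     + 1/3 * (Pdx k1 x t * Pdx (Pdx g) x t + k1 x t * (Pdx k1 x t * g x t + k1 x t * Pdx g x t + k2 x t * g x t))
     + Pdx (Pdx k2) x t * g x t + 2 * Pdx k2 x t * Pdx g x t + k2 x t * Pdx (Pdx g) x t).
  { rewrite EP2. unfold Pdx at 1. dcomp. rewrite HI. field. }
  rewrite A, Rr in L. symmetry in L. pose proof (Rminus_diag_eq _ _ L) as Z.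
  rewrite <- Z. field.
Qed.
End Comp.

Lemma prodx f h : smooth2 f -> smooth2 h -> forall x t,
  Pdx (fun y s => f y s * h y s) x t = Pdx f x t * h x t + f x t * Pdx h x t.
Proof. intros Hf Hh x t. unfold Pdx at 1. dcomp. ring. Qed.

Definition per (L : R) (f : R -> R -> R) := forall y t, f (y + L) t = f y t.

Lemma per_Pdx L f : per L f -> per L (Pdx f).
Proof. intros H y t. unfold Pdx, Derive. f_equal. apply Lim_ext. intros h.
  replace (y + L + h) with ((y + h) + L) by ring. rewrite !H. reflexivity. Qed.

Lemma cont_slice f : smooth2 f -> forall x t, continuous (fun y => f y t) x.
Proof. intros H x t. apply (continuous_comp_2 (fun y : R => y) (fun _ : R => t) f).
  apply continuous_id. apply continuous_const. apply (scont f H). Qed.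

Lemma c2_swap F x y : continuity_2d_pt F x y -> continuity_2d_pt (fun u v => F v u) y x.
Proof. intros H eps. destruct (H eps) as [d Hd]. exists d. intros u v Hu Hv. apply Hd; assumption. Qed.

Theorem mainTheorem4 (g1 g2 g3 k1 k2 : R -> R -> R)
  (Hg1 : smooth2 g1) (Hg2 : smooth2 g2) (Hg3 : smooth2 g3)
  (Hk1 : smooth2 k1) (Hk2 : smooth2 k2)
  (* centroaffine arclength parametrization: det(gamma, gamma', gamma'') = 1 *)
  (Harc : forall x t,
     det3 (g1 x t) (g2 x t) (g3 x t)
          (Pdx g1 x t) (Pdx g2 x t) (Pdx g3 x t)
          (Pdx (Pdx g1) x t) (Pdx (Pdx g2) x t) (Pdx (Pdx g3) x t) = 1)
  (* invariants: gamma''' = (k1 gamma)' + k2 gamma *)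
  (Hinv : forall g, (g = g1 \/ g = g2 \/ g = g3) -> forall x t,
     Pdx (Pdx (Pdx g)) x t = Pdx (fun y s => k1 y s * g y s) x t + k2 x t * g x t)
  (* the flow gamma_t = gamma'' - 2/3 k1 gamma *)
  (Hflow : forall g, (g = g1 \/ g = g2 \/ g = g3) -> forall x t,
     Pdt g x t = Pdx (Pdx g) x t - 2 / 3 * k1 x t * g x t) :
  (forall x t, Pdt k1 x t = Pdx (fun y s => Pdx k1 y s + 2 * k2 y s) x t) /\
  (forall L, 0 < L ->
     (forall g, (g = g1 \/ g = g2 \/ g = g3) -> forall x t, g (x + L) t = g x t) ->
     forall t1 t2, RInt (fun x => k1 x t1) 0 L = RInt (fun x => k1 x t2) 0 L).

Proof.
  assert (HIg : forall g, smooth2 g -> (g = g1 \/ g = g2 \/ g = g3) -> forall x t,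
    Pdx (Pdx (Pdx g)) x t = Pdx k1 x t * g x t + k1 x t * Pdx g x t + k2 x t * g x t).
  { intros g Hs Hor x t. rewrite (Hinv g Hor), prodx by assumption. reflexivity. }
  assert (I1 := HIg g1 Hg1 (or_introl eq_refl)).
  assert (I2 := HIg g2 Hg2 (or_intror (or_introl eq_refl))).
  assert (I3 := HIg g3 Hg3 (or_intror (or_intror eq_refl))).
  assert (F1 := Hflow g1 (or_introl eq_refl)).
  assert (F2 := Hflow g2 (or_intror (or_introl eq_refl))).
  assert (F3 := Hflow g3 (or_intror (or_intror eq_refl))).
  assert (P1 : forall x t, Pdt k1 x t = Pdx (fun y s => Pdx k1 y s + 2 * k2 y s) x t).
  { intros x t.
    assert (Rhs : Pdx (fun y s => Pdx k1 y s + 2 * k2 y s) x t = Pdx (Pdx k1) x t + 2 * Pdx k2 x t).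
    { unfold Pdx at 1. dcomp. ring. }
    rewrite Rhs.
    pose proof (comp g1 k1 k2 Hg1 Hk1 Hk2 I1 F1 x t) as C1.
    pose proof (comp g2 k1 k2 Hg2 Hk1 Hk2 I2 F2 x t) as C2.
    pose proof (comp g3 k1 k2 Hg3 Hk1 Hk2 I3 F3 x t) as C3.
    set (b := Pdt k1 x t - Pdx (Pdx k1) x t - 2 * Pdx k2 x t) in *.
    set (A := Pdx (Pdt k1) x t + Pdt k2 x t - 1/3 * Pdx (Pdx (Pdx k1)) x t - 2/3 * k1 x t * Pdx k1 x t
    - Pdx (Pdx k2) x t) in *.
    assert (Hb : b = 0).
    { transitivity (det3 (g1 x t) (g2 x t) (g3 x t)
        (b * Pdx g1 x t + A * g1 x t) (b * Pdx g2 x t + A * g2 x t) (b * Pdx g3 x t + A * g3 x t)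
        (Pdx (Pdx g1) x t) (Pdx (Pdx g2) x t) (Pdx (Pdx g3) x t)).
      - rewrite <- (Rmult_1_r b) at 1. rewrite <- (Harc x t). unfold det3. ring.
      - rewrite C1, C2, C3. unfold det3. ring. }
    unfold b in Hb. lra. }
  split; [exact P1|].
  intros L HL Hper t1 t2.
  assert (Q1 : per L g1) by (intros y t; apply Hper; auto).
  assert (Q2 : per L g2) by (intros y t; apply Hper; auto).
  assert (Q3 : per L g3) by (intros y t; apply Hper; auto).
  assert (Q1a := per_Pdx _ _ Q1). assert (Q1b := per_Pdx _ _ Q1a). assert (Q1c := per_Pdx _ _ Q1b).
  assert (Q2a := per_Pdx _ _ Q2). assert (Q2b := per_Pdx _ _ Q2a). assert (Q2c := per_Pdx _ _ Q2b).
  assert (Q3a := per_Pdx _ _ Q3). assert (Q3b := per_Pdx _ _ Q3a). assert (Q3c := per_Pdx _ _ Q3b).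
  assert (Ek1 : forall y t, k1 y t = det3 (g1 y t) (g2 y t) (g3 y t)
     (Pdx (Pdx (Pdx g1)) y t) (Pdx (Pdx (Pdx g2)) y t) (Pdx (Pdx (Pdx g3)) y t)
     (Pdx (Pdx g1) y t) (Pdx (Pdx g2) y t) (Pdx (Pdx g3) y t)).
  { intros y t. rewrite I1, I2, I3.
    transitivity (k1 y t * det3 (g1 y t) (g2 y t) (g3 y t)
          (Pdx g1 y t) (Pdx g2 y t) (Pdx g3 y t)
          (Pdx (Pdx g1) y t) (Pdx (Pdx g2) y t) (Pdx (Pdx g3) y t)).
    - rewrite Harc. ring.
    - unfold det3. ring. }
  assert (Pk1 : per L k1).
  { intros y t. rewrite (Ek1 (y + L) t), (Ek1 y t).
    rewrite Q1, Q2, Q3, Q1b, Q2b, Q3b, Q1c, Q2c, Q3c. reflexivity. }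
  assert (Pk1' := per_Pdx _ _ Pk1).
  assert (Ek2 : forall y t, k2 y t = det3 (Pdx g1 y t) (Pdx g2 y t) (Pdx g3 y t)
     (Pdx (Pdx g1) y t) (Pdx (Pdx g2) y t) (Pdx (Pdx g3) y t)
     (Pdx (Pdx (Pdx g1)) y t) (Pdx (Pdx (Pdx g2)) y t) (Pdx (Pdx (Pdx g3)) y t) - Pdx k1 y t).
  { intros y t. rewrite I1, I2, I3.
    transitivity ((Pdx k1 y t + k2 y t) * det3 (g1 y t) (g2 y t) (g3 y t)
          (Pdx g1 y t) (Pdx g2 y t) (Pdx g3 y t)
          (Pdx (Pdx g1) y t) (Pdx (Pdx g2) y t) (Pdx (Pdx g3) y t) - Pdx k1 y t).
    - rewrite Harc. ring.
    - unfold det3. ring. }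
  assert (Pk2 : per L k2).
  { intros y t. rewrite (Ek2 (y + L) t), (Ek2 y t).
    rewrite Q1a, Q2a, Q3a, Q1b, Q2b, Q3b, Q1c, Q2c, Q3c, Pk1'. reflexivity. }
  assert (D0 : forall t, is_derive (fun s => RInt (fun y => k1 y s) 0 L) t 0).
  { intros t.
    assert (E : RInt (fun y => Derive (fun u => k1 y u) t) 0 L = 0).
    { transitivity (RInt (Derive (fun z => Pdx k1 z t + 2 * k2 z t)) 0 L).
      - apply RInt_ext. intros y _. apply (P1 y t).
      - rewrite RInt_Derive.
        + pose proof (Pk1' 0 t) as Z1. pose proof (Pk2 0 t) as Z2.
          rewrite Rplus_0_l in Z1, Z2. lra.
        + intros y _. auto_derive. exd.
        + intros y _. apply (continuous_ext (fun y => Pdt k1 y t)).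
          * intros z. apply (P1 z t).
          * apply cont_slice. sm. }
    cut (is_derive (fun s => RInt (fun y => k1 y s) 0 L) t (RInt (fun y => Derive (fun u => k1 y u) t) 0 L)).
    { intros H. rewrite E in H. exact H. }
    apply (is_derive_RInt_param (fun u y => k1 y u)).
    - apply filter_forall. intros s y _. apply (st k1 Hk1).
    - intros y _. apply (c2_swap (Pdt k1)). apply continuity_2d_pt_filterlim.
      apply (scont (Pdt k1)). sm.
    - apply filter_forall. intros s. apply (@ex_RInt_continuous R_CompleteNormedModule). intros z _.
      apply (cont_slice k1 Hk1). }
  destruct (MVT_cor4 (fun s => RInt (fun y => k1 y s) 0 L) (fun _ => 0) t1 (Rabs (t2 - t1))
    (fun c _ => D0 c) t2 (Rle_refl _)) as [c [Hc _]].
  simpl in Hc. lra.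
Qed.
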